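(* For all $m,n\in\mathbb{N}$ and every $\xi\in\mathbb{C}^{\Lambda^{\le}(m,n)}$, \[ \pi_2\big(M_\xi\colon\mathcal{P}_{\le m}(\mathbb{T}^n)\to\ell_{\frac{2m}{m+1}}(\Lambda^{\le}(m,n))\big)\le|\Lambda^{\le}(m,n)|^{\frac1{2m}}\|\xi\|_\infty . \] Moreover, for $\xi=\mathbf 1=(1,\dots,1)$, \[ \sqrt{1+\tfrac{n-1}{m}}\le\pi_2\big(M_{\mathbf 1}\colon\mathcal{P}_{\le m}(\mathbb{T}^n)\to\ell_{\frac{2m}{m+1}}(\Lambda^{\le}(m,n))\big)=|\Lambda^{\le}(m,n)|^{\frac1{2m}}\le2\sqrt{2e}\,\sqrt{1+\tfrac{n-1}{m}}. \]
   Context: $\Lambda^{\le}(m,n)=\{\alpha\in\mathbb{N}_0^n:\sum_j\alpha_j\le m\}$ and $|\Lambda^{\le}(m,n)|$ its cardinality. $\mathcal{P}_{\le m}(\mathbb{T}^n)$ is the space of analytic trigonometric polynomials $\sum_{\alpha\in\Lambda^{\le}(m,n)}c_\alpha z^\alpha$ on $\mathbb{T}^n$ with sup norm; $M_\xi P=(\xi_\alpha\widehat P(\alpha))_\alpha$. $\pi_2$ is the absolutely 2-summing norm. *)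

(* Defs.v *)
From mathcomp Require Import all_boot all_order all_algebra.
From mathcomp Require Import all_classical all_reals all_analysis.
From mathcomp Require Import complex.
Set Implicit Arguments. Unset Strict Implicit. Unset Printing Implicit Defensive.
Import Order.TTheory GRing.Theory Num.Theory.
Local Open Scope ring_scope.
Local Open Scope classical_set_scope.

Definition cabs (R : realType) (z : R[i]) : R := ComplexField.Normc.normc z.

(* Lambda^<=(m,n) = { alpha in N_0^n : |alpha| <= m }.  Each coordinate of such
   an alpha is <= m, so alpha is encoded as a function 'I_n -> 'I_m.+1. *)
Definition Lam (m n : nat) :=
  {a : {ffun 'I_n -> 'I_m.+1} | (\sum_(j < n) (a j : nat) <= m)%N}.

Definition alpha_nat (m n : nat) (a : Lam m n) (j : 'I_n) : nat := val a j.

Definition card_Lam (m n : nat) : nat := #|{: Lam m n}|.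

(* An element P of P_{<=m}(T^n) is given by its coefficient vector
   (hat P(alpha))_{alpha in Lambda^<=(m,n)}; its value at z : *)
Definition peval (R : realType) (m n : nat) (c : Lam m n -> R[i])
  (z : 'I_n -> R[i]) : R[i] :=
  \sum_(a : Lam m n) c a * \prod_(j < n) z j ^+ alpha_nat a j.

Definition torus (R : realType) (n : nat) : set ('I_n -> R[i]) :=
  [set z | forall j, cabs (z j) = 1].

Definition supnorm (R : realType) (m n : nat) (c : Lam m n -> R[i]) : R :=
  sup [set cabs (peval c z) | z in @torus R n].

(* closed unit ball of the dual of (P_{<=m}(T^n), sup norm): linear functionals
   phi(P) = sum_alpha w_alpha hat P(alpha) with |phi(P)| <= ||P||_oo for all P *)
Definition dual_ball (R : realType) (m n : nat) : set (Lam m n -> R[i]) :=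
  [set w | forall c : Lam m n -> R[i],
      cabs (\sum_(a : Lam m n) w a * c a) <= supnorm c].

Definition weak2 (R : realType) (m n k : nat) (x : 'I_k -> Lam m n -> R[i]) : R :=
  sup [set Num.sqrt (\sum_(i < k) cabs (\sum_(a : Lam m n) w a * x i a) ^+ 2)
       | w in @dual_ball R m n].

Definition lpnorm (R : realType) (m n : nat) (p : R) (y : Lam m n -> R[i]) : R :=
  (\sum_(a : Lam m n) cabs (y a) `^ p) `^ p^-1.

Definition linfnorm (R : realType) (m n : nat) (y : Lam m n -> R[i]) : R :=
  \big[Num.max/0]_(a : Lam m n) cabs (y a).

Definition pm (R : realType) (m : nat) : R := (2 * m)%:R / (m.+1)%:R.

Definition Mxi (R : realType) (m n : nat) (xi : Lam m n -> R[i])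
  (c : Lam m n -> R[i]) : Lam m n -> R[i] := fun a => xi a * c a.

Definition pi2 (R : realType) (m n : nat) (p : R)
  (T : (Lam m n -> R[i]) -> (Lam m n -> R[i])) : R :=
  inf [set C : R | 0 <= C /\
        forall (k : nat) (x : 'I_k -> Lam m n -> R[i]),
          Num.sqrt (\sum_(i < k) lpnorm p (T (x i)) ^+ 2) <= C * weak2 x].

(* Main.v *)
Require Import Defs.
From mathcomp Require Import all_boot all_order all_algebra.
From mathcomp Require Import all_classical all_reals all_analysis.
From mathcomp Require Import complex.
From mathcomp Require Import separable cyclotomic cyclic.
From mathcomp Require Import ring lra zify.
Import Order.TTheory GRing.Theory Num.Theory.
Local Open Scope ring_scope.
Local Open Scope classical_set_scope.

Lemma prim_root_exists (C : numClosedFieldType) n : (n > 0)%N ->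
  {z : C | n.-primitive_root z}.
Proof.
pose p : {poly C} := 'X^n - 1; have [r Dp] := closed_field_poly_normal p.
move=> n_gt0; apply/sigW; rewrite (monicP _) ?monicXnsubC // scale1r in Dp.
have rn1: all n.-unity_root r by apply/allP=> z; rewrite -root_prod_XsubC -Dp.
have sz_r: (n < (size r).+1)%N.
  by rewrite -(size_prod_XsubC r id) -Dp size_XnsubC.
have [|z] := hasP (has_prim_root n_gt0 rn1 _ sz_r); last by exists z.
by rewrite -separable_prod_XsubC -Dp separable_Xn_sub_1 // pnatr_eq0 -lt0n.
Qed.

Section Cabs.
Variable R : realType.
Implicit Types x y z : R[i].

Lemma cabsC z : (cabs z)%:C%C = `|z|.
Proof. by rewrite normc_def; case: z. Qed.

Lemma cabs_ge0 z : 0 <= cabs z.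
Proof. by rewrite -(@lecR R) cabsC; exact: normr_ge0. Qed.

Lemma cabsM x y : cabs (x * y) = cabs x * cabs y.
Proof. by apply: (@complexI R); rewrite rmorphM /= !cabsC normrM. Qed.

Lemma cabsD x y : cabs (x + y) <= cabs x + cabs y.
Proof. by rewrite -(@lecR R) rmorphD /= !cabsC ler_normD. Qed.

Lemma cabs1 : cabs (1 : R[i]) = 1.
Proof. by apply: (@complexI R); rewrite cabsC normr1. Qed.

Lemma cabs0 : cabs (0 : R[i]) = 0.
Proof. by apply: (@complexI R); rewrite cabsC normr0. Qed.

Lemma cabsX x k : cabs (x ^+ k) = cabs x ^+ k.
Proof. by apply: (@complexI R); rewrite rmorphXn /= !cabsC normrX. Qed.

Lemma cabs_prod (I : finType) (F : I -> R[i]) : cabs (\prod_i F i) = \prod_i cabs (F i).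
Proof. by apply: (@complexI R); rewrite rmorph_prod /= cabsC normr_prod; apply: eq_bigr => i _; rewrite cabsC. Qed.

Lemma cabs_sum (I : finType) (F : I -> R[i]) : cabs (\sum_i F i) <= \sum_i cabs (F i).
Proof. by rewrite -(@lecR R) rmorph_sum /= cabsC (le_trans (ler_norm_sum _ _ _)) // le_eqVlt; apply/orP; left; apply/eqP; apply: eq_bigr => i _; rewrite cabsC. Qed.

Lemma cabs_sq z : ((cabs z)^+2)%:C%C = z * z^*%C.
Proof. by rewrite rmorphXn /= cabsC sqr_normc. Qed.

End Cabs.

Section PM.
Variable R : realType.

Lemma young_r (x r : R) : 0 <= x -> 0 < r < 1 -> x `^ r <= r * x + (1 - r).
Proof.
move=> x0 /andP[r0 r1].
have := @conjugate_powR R (x `^ r) 1 (r^-1) ((1 - r)^-1) (powR_ge0 _ _) ler01.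
rewrite invr_gt0 r0 invr_gt0 subr_gt0 r1 !invrK => /(_ isT isT).
rewrite addrC subrK => /(_ erefl).
by rewrite mulr1 -powRrM mulfV ?gt_eqF // powRr1 // powR1 mul1r mulrC.
Qed.

Lemma pmean (I : finType) (s : I -> R) (r : R) : 0 < r < 1 ->
  (forall i, 0 <= s i) -> (0 < #|I|)%N ->
  \sum_i s i `^ r <= #|I|%:R * ((\sum_i s i) / #|I|%:R) `^ r.
Proof.
move=> hr s0 I0.
set S := \sum_i s i; set N : R := #|I|%:R.
have N0 : 0 < N by rewrite ltr0n.
have S0 : 0 <= S by apply: sumr_ge0.
have [SS|Spos] := eqVneq S 0.
  have si0 i : s i = 0.
    have : s i <= S by rewrite /S (bigD1 i) //= lerDl sumr_ge0.
    by rewrite SS => h; apply: le_anti; rewrite h s0.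
  rewrite big1; last by move=> i _; rewrite si0 powR0 // gt_eqF //; case/andP: hr.
  by rewrite mulr_ge0 ?powR_ge0 // ltW.
have Sp : 0 < S by rewrite lt_def Spos S0.
set M := S / N.
have M0 : 0 < M by rewrite divr_gt0.
have e i : s i `^ r = M `^ r * (s i / M) `^ r.
  by rewrite -powRM ?(ltW M0) ?divr_ge0 ?(ltW M0) // mulrC divfK ?gt_eqF.
under eq_bigr do rewrite e.
rewrite -big_distrr /= mulrC ler_pM2r ?powR_gt0 //.
apply: le_trans.
  apply: ler_sum => i _; apply: young_r hr; exact: divr_ge0 (s0 i) (ltW M0).
rewrite big_split /= -big_distrr /= -big_distrl /= sumr_const.
rewrite -/S /M -/N.
have hN : N != 0 by rewrite gt_eqF.
have hS : S != 0 by [].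
have -> : S / (S / N) = N by field; rewrite hN hS.
rewrite -mulr_natr -/N -mulrDl addrC subrK mul1r //.
Qed.
End PM.


Section Main.
Variable R : realType.
Variables m n : nat.
Local Notation L := (Lam m n).
Local Notation K := m.+1.
Lemma cabs_mono (z : 'I_n -> R[i]) (a : L) : torus z ->
  cabs (\prod_(j < n) z j ^+ alpha_nat a j) = 1.
Proof.
move=> tz; rewrite cabs_prod; apply: big1 => j _.
by rewrite cabsX tz expr1n.
Qed.

Lemma peval_bound (c : L -> R[i]) z : torus z ->
  cabs (peval c z) <= \sum_a cabs (c a).
Proof.
move=> tz; rewrite /peval; apply: le_trans; first exact: cabs_sum.
by apply: ler_sum => a _; rewrite cabsM cabs_mono // mulr1.
Qed.

Lemma torus1 : torus (fun _ : 'I_n => 1 : R[i]).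
Proof. by move=> j; rewrite cabs1. Qed.

Lemma supnorm_ub (c : L -> R[i]) z : torus z -> cabs (peval c z) <= supnorm c.
Proof.
move=> tz; apply: ub_le_sup; last by exists z.
exists (\sum_a cabs (c a)) => _ [y ty <-]; exact: peval_bound.
Qed.

Lemma supnorm_le (c : L -> R[i]) : supnorm c <= \sum_a cabs (c a).
Proof.
apply: ge_sup; first by exists (cabs (peval c (fun _ => 1))), (fun _ => 1); last by [];
  exact: torus1.
by move=> _ [y ty <-]; exact: peval_bound.
Qed.

Lemma supnorm_ge0 (c : L -> R[i]) : 0 <= supnorm c.
Proof. apply: le_trans (supnorm_ub c (fun _ => 1) torus1); exact: cabs_ge0. Qed.

Definition delta (a : L) : L -> R[i] := fun b => if b == a then 1 else 0.

Lemma dual_ball_le1 (w : L -> R[i]) a : dual_ball w -> cabs (w a) <= 1.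
Proof.
move=> /(_ (delta a)); rewrite (bigD1 a) //= /delta eqxx mulr1 big1 ?addr0; last first.
  by move=> b /negbTE ->; rewrite mulr0.
move=> h; apply: le_trans h _; apply: le_trans (supnorm_le _) _.
rewrite (bigD1 a) //= eqxx cabs1 big1 ?addr0 //.
by move=> b /negbTE ->; rewrite cabs0.
Qed.

Lemma dual_ball0 : dual_ball (fun _ : L => 0 : R[i]).
Proof.
move=> c; rewrite big1 ?cabs0 ?supnorm_ge0 // => a _; exact: mul0r.
Qed.

Lemma dual_ball_eval (z : 'I_n -> R[i]) : torus z ->
  dual_ball (fun a : L => \prod_(j < n) z j ^+ alpha_nat a j).
Proof.
move=> tz c; have := supnorm_ub c z tz; rewrite /peval.
by under eq_bigr do rewrite mulrC.
Qed.

Lemma weak2_ge k (x : 'I_k -> L -> R[i]) (w : L -> R[i]) : dual_ball w ->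
  Num.sqrt (\sum_(i < k) cabs (\sum_a w a * x i a) ^+ 2) <= weak2 x.
Proof.
move=> wb; apply: ub_le_sup; last by exists w.
exists (Num.sqrt (\sum_(i < k) (\sum_a cabs (x i a)) ^+ 2)) => _ [v vb <-].
rewrite ler_sqrt; last by apply: sumr_ge0 => i _; apply: sqr_ge0.
apply: ler_sum => i _.
have h0 : 0 <= \sum_a cabs (x i a) by apply: sumr_ge0 => a _; exact: cabs_ge0.
rewrite lerXn2r ?nnegrE ?cabs_ge0 //.
apply: le_trans; first exact: cabs_sum.
apply: ler_sum => a _; rewrite cabsM; apply: ler_piMl; first exact: cabs_ge0.
exact: dual_ball_le1.
Qed.

Lemma weak2_le k (x : 'I_k -> L -> R[i]) B :
  (forall w : L -> R[i], dual_ball w ->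
    Num.sqrt (\sum_(i < k) cabs (\sum_a w a * x i a) ^+ 2) <= B) -> weak2 x <= B.
Proof.
move=> h; apply: ge_sup; first by exists (Num.sqrt (\sum_(i < k) cabs (\sum_a (fun _ => 0) a * x i a) ^+ 2)), (fun _ => 0); first exact: dual_ball0.
by move=> _ [v vb <-]; apply: h.
Qed.


Definition w : R[i] := sval (prim_root_exists R[i] K (ltn0Sn m)).
Lemma hw : K.-primitive_root w.
Proof. exact: svalP (prim_root_exists R[i] K (ltn0Sn m)). Qed.
Local Notation J := {ffun 'I_n -> 'I_K}.
Definition zt (j : J) : 'I_n -> R[i] := fun l => w ^+ j l.
Definition uu (j : J) (a : L) : R[i] := \prod_(l < n) zt j l ^+ alpha_nat a l.

Lemma cabs_w : cabs w = 1.
Proof.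
have h : cabs w ^+ K = 1 by rewrite -cabsX (prim_expr_order hw) cabs1.
by apply/eqP; rewrite -(pexpr_eq1 (n:=K)) // ?h // cabs_ge0.
Qed.

Lemma torus_zt j : torus (zt j).
Proof. by move=> l; rewrite /zt cabsX cabs_w expr1n. Qed.

Lemma cabs_uu j a : cabs (uu j a) = 1.
Proof. exact: cabs_mono (torus_zt j). Qed.

Lemma wJw : w * (w^*)%C = 1.
Proof. by rewrite -cabs_sq cabs_w expr1n. Qed.

Lemma geo0 (z : R[i]) : z ^+ K = 1 -> z != 1 -> \sum_(t < K) z ^+ t = 0.
Proof.
move=> zK z1; have := subrX1 z K; rewrite zK subrr => /esym /eqP.
by rewrite mulf_eq0 subr_eq0 (negbTE z1) /= => /eqP.
Qed.

Lemma orth (a b : L) :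
  \sum_(j : J) uu j a * (uu j b)^*%C = (#|J|%:R) * (a == b)%:R.
Proof.
pose F (l : 'I_n) (t : 'I_K) := (w ^+ alpha_nat a l * (w^*)%C ^+ alpha_nat b l) ^+ t.
transitivity (\sum_(j : J) \prod_(l < n) F l (j l)).
  apply: eq_bigr => j _; rewrite /uu rmorph_prod -big_split /=; apply: eq_bigr => l _.
  by rewrite /F /zt rmorphXn /= rmorphXn /= exprMn -!exprM mulnC [(alpha_nat b l * _)%N]mulnC.
rewrite -bigA_distr_bigA /= /F.
have [<-|ab] := eqVneq a b.
  rewrite mulr1 card_ffun !card_ord natrX (eq_bigr (fun _ => K%:R)) ?prodr_const ?card_ord //.
  move=> l _; rewrite -exprMn wJw expr1n.
  under eq_bigr do rewrite expr1n.
  by rewrite sumr_const card_ord.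
have [l hl] : exists l, alpha_nat a l != alpha_nat b l.
  apply/existsP; apply: contraR ab => /existsPn hl; apply/eqP; apply: val_inj.
  by apply/ffunP => l; apply/val_inj; have /negPn/eqP := hl l.
rewrite mulr0 (bigD1 l) //= geo0 ?mul0r //.
  have wK : w ^+ K = 1 := prim_expr_order hw.
  have wJK : (w^*)%C ^+ K = 1 by rewrite -rmorphXn /= wK rmorph1.
  by rewrite exprMn -!exprM !(mulnC _ K) !exprM wK wJK !expr1n mulr1.
apply: contra hl => /eqP h1.
have : w ^+ alpha_nat a l = w ^+ alpha_nat b l.
  rewrite -[LHS]mulr1 -(expr1n _ (alpha_nat b l)) -wJw exprMn mulrA mulrAC h1 mul1r //.
move/eqP; rewrite (eq_prim_root_expr hw) !modn_small // /alpha_nat; exact: ltn_ord.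
Qed.

Lemma parseval (c : L -> R[i]) :
  \sum_(j : J) cabs (\sum_a c a * uu j a) ^+ 2 = #|J|%:R * \sum_a cabs (c a) ^+ 2.
Proof.
apply: (@complexI R); rewrite rmorph_sum rmorphM rmorph_sum rmorph_nat /=.
under eq_bigr do rewrite cabs_sq rmorph_sum big_distrlr /=.
under [in RHS]eq_bigr do rewrite cabs_sq.
rewrite exchange_big /= big_distrr /=; apply: eq_bigr => a _.
rewrite exchange_big /= (bigD1 a) //= [X in _ + X]big1 ?addr0.
  under eq_bigr do rewrite rmorphM /= mulrACA.
  by rewrite -big_distrr /= orth eqxx mulr1 mulrC.
move=> b hb; under eq_bigr do rewrite rmorphM /= mulrACA.
by rewrite -big_distrr /= orth eq_sym (negbTE hb) !mulr0.
Qed.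

Hypothesis hm : (1 <= m)%N.

Lemma Lam_gt0 : (0 < #|{: L}|)%N.
Proof.
apply/card_gt0P.
have h : (\sum_(j < n) ([ffun _ => ord0] : {ffun 'I_n -> 'I_m.+1}) j <= m)%N.
  by rewrite big1 // => j _; rewrite ffunE.
by exists (exist (fun a : {ffun 'I_n -> 'I_m.+1} => (\sum_(j < n) a j <= m)%N) _ h).
Qed.

Lemma pm_inv : (@pm R m)^-1 = (2 * m)%:R^-1 + 2^-1.
Proof.
have m0 : (m%:R : R) != 0 by rewrite pnatr_eq0 -lt0n.
rewrite /pm invf_div natrM -addn1 natrD; field; rewrite m0 //=.
Qed.

Lemma lp_bound (y : L -> R[i]) :
  lpnorm (@pm R m) y <= (#|{: L}|%:R) `^ ((2 * m)%:R^-1) *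
    Num.sqrt (\sum_a cabs (y a) ^+ 2).
Proof.
have m0 : (m%:R : R) != 0 by rewrite pnatr_eq0 -lt0n.
set p := @pm R m; set r : R := m%:R / m.+1%:R.
have p2r : p = 2 * r by rewrite /p /r /pm natrM mulrA.
have r01 : 0 < r < 1.
  rewrite /r divr_gt0 ?ltr0n // ?ltr_pdivrMr ?ltr0n // mul1r ltr_nat ltnSn ?andbT //.
set N : R := #|{: L}|%:R.
set S := \sum_a cabs (y a) ^+ 2.
have N0 : 0 < N by rewrite ltr0n Lam_gt0.
have S0 : 0 <= S by apply: sumr_ge0 => a _; exact: sqr_ge0.
have e a : cabs (y a) `^ p = (cabs (y a) ^+ 2) `^ r.
  by rewrite -powR_mulrn ?cabs_ge0 // -powRrM p2r.
have h2 : \sum_a cabs (y a) `^ p <= N * (S / N) `^ r.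
  under eq_bigr do rewrite e.
  apply: pmean => //; last exact: Lam_gt0.
  move=> a; exact: sqr_ge0.
rewrite /lpnorm -/p.
apply: le_trans.
  apply: (ge0_ler_powR (r := p^-1)) h2.
  - by rewrite invr_ge0 p2r mulr_ge0 // ltW //; case/andP: r01.
  - by rewrite nnegrE sumr_ge0 // => a _; exact: powR_ge0.
  - by rewrite nnegrE mulr_ge0 ?powR_ge0 // ltW.
rewrite powRM ?powR_ge0 ?(ltW N0) // -powRrM.
have -> : r * p^-1 = 2^-1 by rewrite p2r invfM mulrCA mulfV ?mulr1 // gt_eqF //; case/andP: r01.
rewrite pm_inv powRD; last by rewrite gt_eqF.
rewrite -mulrA -powRM ?(ltW N0) ?divr_ge0 ?(ltW N0) //.
by rewrite [N * _]mulrC divfK ?gt_eqF // powR12_sqrt.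
Qed.
Lemma sqrt_le_sq (A W : R) : 0 <= A -> Num.sqrt A <= W -> A <= W ^+ 2.
Proof.
move=> A0 h; have W0 : 0 <= W := le_trans (sqrtr_ge0 _) h.
by rewrite -(sqr_sqrtr A0) lerXn2r ?nnegrE ?sqrtr_ge0.
Qed.

Lemma weak2_ge0 k (x : 'I_k -> L -> R[i]) : 0 <= weak2 x.
Proof. have h := weak2_ge k x _ dual_ball0. exact: le_trans (sqrtr_ge0 _) h. Qed.

Lemma sum_l2_le_weak2 k (x : 'I_k -> L -> R[i]) :
  \sum_(i < k) \sum_a cabs (x i a) ^+ 2 <= weak2 x ^+ 2.
Proof.
have Jpos : (0 < #|{: J}|)%N by rewrite card_ffun card_ord expn_gt0.
have hJ : (0 : R) < #|{: J}|%:R by rewrite ltr0n.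
rewrite -(ler_pM2l hJ).
have e : #|{: J}|%:R * (\sum_(i < k) \sum_a cabs (x i a) ^+ 2) =
  \sum_(j : J) \sum_(i < k) cabs (\sum_a uu j a * x i a) ^+ 2.
  rewrite [RHS]exchange_big big_distrr /=; apply: eq_bigr => i _.
  rewrite -parseval; apply: eq_bigr => j _.
  by under eq_bigr do rewrite mulrC.
rewrite e mulr_natl -sumr_const.
apply: ler_sum => j _; apply: sqrt_le_sq.
  by apply: sumr_ge0 => i _; exact: sqr_ge0.
apply: weak2_ge; exact: dual_ball_eval (torus_zt j).
Qed.


Local Notation Nq := ((#|{: L}|%:R : R) `^ ((2 * m)%:R^-1)).

Lemma sq_le_sqrt (X Y : R) : 0 <= Y -> X <= Y ^+ 2 -> Num.sqrt X <= Y.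
Proof.
move=> Y0 h; rewrite -(ger0_norm Y0) -sqrtr_sqr.
by rewrite ler_sqrt // sqr_ge0.
Qed.

Lemma linf_ge (xi : L -> R[i]) a : cabs (xi a) <= linfnorm xi.
Proof. exact: le_bigmax. Qed.

Lemma linf_ge0 (xi : L -> R[i]) : 0 <= linfnorm xi.
Proof. exact: bigmax_ge_id. Qed.

Lemma linf1 : linfnorm (fun _ : L => 1 : R[i]) = 1.
Proof.
apply: le_anti; apply/andP; split.
  by apply: bigmax_le => // a _; rewrite cabs1.
have [a0 _] := card_gt0P Lam_gt0.
by have := linf_ge (fun _ => 1) a0; rewrite cabs1.
Qed.

Lemma lp_Mxi (xi : L -> R[i]) (c : L -> R[i]) :
  lpnorm (@pm R m) (Mxi xi c) <= Nq * linfnorm xi * Num.sqrt (\sum_a cabs (c a) ^+ 2).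
Proof.
apply: le_trans; first exact: lp_bound.
rewrite -mulrA ler_wpM2l ?powR_ge0 //.
rewrite -(ger0_norm (linf_ge0 xi)) -sqrtr_sqr -sqrtrM ?sqr_ge0 // ler_sqrt; last first.
  by rewrite mulr_ge0 ?sqr_ge0 // sumr_ge0 // => a _; exact: sqr_ge0.
rewrite big_distrr /=; apply: ler_sum => a _.
rewrite /Mxi cabsM exprMn ler_wpM2r ?sqr_ge0 //.
rewrite lerXn2r ?nnegrE ?cabs_ge0 ?linf_ge0 //; exact: linf_ge.
Qed.

Lemma part1_ineq (xi : L -> R[i]) k (x : 'I_k -> L -> R[i]) :
  Num.sqrt (\sum_(i < k) lpnorm (@pm R m) (Mxi xi (x i)) ^+ 2)
    <= Nq * linfnorm xi * weak2 x.
Proof.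
have c0 : 0 <= Nq * linfnorm xi by rewrite mulr_ge0 ?powR_ge0 ?linf_ge0.
apply: sq_le_sqrt; first by rewrite mulr_ge0 // weak2_ge0.
apply: (@le_trans _ _ ((Nq * linfnorm xi) ^+ 2 * \sum_(i < k) \sum_a cabs (x i a) ^+ 2)).
  rewrite big_distrr /=; apply: ler_sum => i _.
  have h := lp_Mxi xi (x i).
  have B0 : 0 <= Nq * linfnorm xi * Num.sqrt (\sum_a cabs (x i a) ^+ 2).
    by rewrite mulr_ge0 // sqrtr_ge0.
  apply: le_trans (_ : _ <= (Nq * linfnorm xi * Num.sqrt (\sum_a cabs (x i a) ^+ 2)) ^+ 2) _.
    by rewrite lerXn2r ?nnegrE ?powR_ge0.
  rewrite exprMn sqr_sqrtr // sumr_ge0 // => a _; exact: sqr_ge0.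
rewrite [in X in _ <= X]exprMn ler_wpM2l ?sqr_ge0 //; exact: sum_l2_le_weak2.
Qed.

Definition pi2set (xi : L -> R[i]) := [set C : R | 0 <= C /\
        forall (k : nat) (x : 'I_k -> L -> R[i]),
          Num.sqrt (\sum_(i < k) lpnorm (@pm R m) (Mxi xi (x i)) ^+ 2) <= C * weak2 x].

Lemma pi2E (xi : L -> R[i]) : pi2 (@pm R m) (Mxi xi) = inf (pi2set xi).
Proof. by []. Qed.

Lemma mem1 (xi : L -> R[i]) : pi2set xi (Nq * linfnorm xi).
Proof.
split; first by rewrite mulr_ge0 ?powR_ge0 ?linf_ge0.
by move=> k x; exact: part1_ineq.
Qed.

Lemma part1 (xi : L -> R[i]) : pi2 (@pm R m) (Mxi xi) <= Nq * linfnorm xi.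
Proof.
rewrite pi2E; apply: ge_inf; last exact: mem1.
by exists 0 => C [].
Qed.


Lemma NpE : (#|{: L}|%:R : R) `^ ((@pm R m)^-1) = Nq * Num.sqrt (#|{: L}|%:R).
Proof.
rewrite pm_inv powRD; last by apply/implyP => _; rewrite pnatr_eq0 -lt0n Lam_gt0.
by rewrite powR12_sqrt.
Qed.

Lemma lp_uu (j : J) : lpnorm (@pm R m) (Mxi (fun _ => 1) (uu j)) = (#|{: L}|%:R : R) `^ ((@pm R m)^-1).
Proof.
rewrite /lpnorm /Mxi; congr (_ `^ _).
under eq_bigr do rewrite mul1r cabs_uu powR1.
by rewrite sumr_const.
Qed.

Lemma lower : Nq <= pi2 (@pm R m) (Mxi (fun _ : L => 1 : R[i])).
Proof.
rewrite pi2E; apply: lb_le_inf; first by exists (Nq * linfnorm (fun _ : L => 1 : R[i])); exact: mem1.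
move=> C [C0 hC].
pose x := fun i : 'I_#|{: J}| => uu (enum_val i).
have := hC _ x.
have N0 : (0 : R) < #|{: L}|%:R by rewrite ltr0n Lam_gt0.
have Jpos : (0 < #|{: J}|)%N by rewrite card_ffun card_ord expn_gt0.
have k0 : (0 : R) < #|{: J}|%:R by rewrite ltr0n.
have hw2 : weak2 x <= Num.sqrt (#|{: J}|%:R * #|{: L}|%:R).
  apply: weak2_le => v vb; rewrite ler_sqrt ?mulr_ge0 ?ler0n //.
  rewrite -(big_enum_val (A := xpredT) (fun j : J => cabs (\sum_a v a * uu j a) ^+ 2)).
  rewrite parseval ler_wpM2l ?ler0n //.
  apply: le_trans (_ : _ <= \sum_(a : L) 1) _; last by rewrite sumr_const.
  apply: ler_sum => a _.
  by rewrite expr_le1 ?cabs_ge0 ?dual_ball_le1.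
have e : \sum_(i < #|{: J}|) lpnorm (@pm R m) (Mxi (fun _ => 1) (x i)) ^+ 2 =
    #|{: J}|%:R * ((#|{: L}|%:R : R) `^ ((@pm R m)^-1)) ^+ 2.
  rewrite /x; under eq_bigr do rewrite lp_uu.
  by rewrite sumr_const card_ord mulr_natl.
rewrite e sqrtrM ?ler0n // sqrtr_sqr ger0_norm ?powR_ge0 // NpE => h.
have := le_trans h (ler_wpM2l C0 hw2).
rewrite sqrtrM ?ler0n // mulrCA ler_pM2r //.
by rewrite mulr_gt0 ?sqrtr_gt0.
Qed.

End Main.


Local Close Scope ring_scope.
Section Count.
Variable T : finType.

Definition cons_ff n (t : T) (g : {ffun 'I_n -> T}) : {ffun 'I_n.+1 -> T} :=
  [ffun i => if unlift ord0 i is Some j then g j else t].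
Arguments cons_ff {n}.

Definition uncons_ff n (a : {ffun 'I_n.+1 -> T}) : T * {ffun 'I_n -> T} :=
  (a ord0, [ffun j => a (lift ord0 j)]).

Lemma sum_ffunS n (F : {ffun 'I_n.+1 -> T} -> nat) :
  \sum_(a : {ffun 'I_n.+1 -> T}) F a =
  \sum_(t : T) \sum_(g : {ffun 'I_n -> T}) F (cons_ff t g).
Proof.
rewrite pair_bigA /=.
rewrite (reindex (fun p : T * {ffun 'I_n -> T} => cons_ff p.1 p.2)) //=.
exists (@uncons_ff n) => [[t g] _|a _].
  rewrite /uncons_ff /cons_ff ffunE unlift_none; congr pair.
  by apply/ffunP => j; rewrite !ffunE liftK.
apply/ffunP => i; rewrite /uncons_ff /cons_ff /= ffunE.
case: unliftP => [j ->|->]; by rewrite ?ffunE.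
Qed.

End Count.

Section Count2.
Variable M : nat.

Definition cnt n s := \sum_(a : {ffun 'I_n -> 'I_M.+1}) (\sum_(j < n) (a j : nat) <= s)%N.

Lemma hockey s n : \sum_(t < s.+1) 'C(s - t + n, n) = 'C(s + n.+1, n.+1).
Proof.
elim: s => [|s IH].
  by rewrite big_ord_recl big_ord0 /= addn0 sub0n !add0n (binn n) (binn n.+1).
rewrite big_ord_recl /= subn0.
under eq_bigr do rewrite /bump /= add1n subSS.
by rewrite IH addSn [in RHS]addnS binS addnC -addnS addSnnS [(s + _)%N]addnC.
Qed.

Lemma cntE n s : (s <= M)%N -> cnt n s = 'C(s + n, n).
Proof.
elim: n s => [|n IH] s sM.
  rewrite /cnt (eq_bigr (fun _ => 1%N)); last by move=> a _; rewrite big_ord0.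
  by rewrite sum1_card card_ffun !card_ord expn0 addn0 bin0.
rewrite /cnt sum_ffunS.
transitivity (\sum_(t < M.+1 | (t <= s)%N) cnt n (s - t)).
  rewrite [RHS]big_mkcond /=; apply: eq_bigr => t _.
  case: leqP => ts.
    apply: eq_bigr => g _; rewrite big_ord_recl /cons_ff ffunE unlift_none.
    congr nat_of_bool; under eq_bigr do rewrite ffunE liftK.
    by rewrite leq_subRL.
  rewrite big1 // => g _; rewrite big_ord_recl /cons_ff ffunE unlift_none.
  by apply/eqP; rewrite eqb0 -ltnNge ltn_addr.
transitivity (\sum_(t < s.+1) 'C(s - t + n, n)); last exact: hockey.
rewrite [RHS](big_ord_widen M.+1 (fun t => 'C(s - t + n, n))) //=.
apply: eq_big => [t|t ht]; first by rewrite ltnS.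
by rewrite IH // (leq_trans (leq_subr _ _) sM).
Qed.

End Count2.

Lemma card_LamE m n : card_Lam m n = 'C(m + n, n).
Proof.
rewrite /card_Lam card_sig -(@cntE m n m (leqnn m)) /cnt.
by rewrite -sum1_card big_mkcond /=; apply: eq_bigr => a _; rewrite inE; case: leqP.
Qed.
Local Open Scope ring_scope.



Lemma expn_mono (a b e : nat) : (a <= b)%N -> (a ^ e <= b ^ e)%N.
Proof. by move=> ab; elim: e => // e IH; rewrite !expnS leq_mul. Qed.

Lemma binS_rel m n : ((m.+1) * 'C(m.+1 + n, m.+1) = (m.+1 + n) * 'C(m + n, m))%N.
Proof. by rewrite -mul_bin_diag. Qed.

Lemma bin_lower n m : ((m + n) ^ m <= m ^ m * 'C(m + n, m))%N.
Proof.
elim: m => [|m IH]; first by rewrite expn0 bin0.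
rewrite expnS [((m.+1) ^ m.+1)%N]expnS.
rewrite [X in (_ <= X)%N](_ : _ = (m.+1 + n) * (m.+1 ^ m * 'C(m + n, m)))%N; last first.
  by rewrite mulnCA -binS_rel mulnCA mulnA.
rewrite leq_mul2l; apply/orP; right.
have mm0 : (0 < m ^ m)%N by rewrite expn_gt0; case: m {IH} => //.
rewrite -(leq_pmul2l mm0) -expnMn mulnCA.
apply: leq_trans (_ : ((m.+1 * (m + n)) ^ m <= _)%N).
  by apply: expn_mono; nia.
by rewrite expnMn leq_mul2l IH orbT.
Qed.

Section RB.
Variable R : realType.

Lemma succ_pow_le (m : nat) : ((m.+1)%:R : R) ^+ m <= expR 1 * (m%:R) ^+ m.
Proof.
case: m => [|m]; first by rewrite !expr0 mulr1 -expR0 ler_expR.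
set k := m.+1.
have k0 : (0 : R) < k%:R by rewrite ltr0n.
have -> : (k.+1%:R : R) = k%:R * (1 + k%:R^-1) by rewrite mulrDr mulr1 mulfV ?gt_eqF // -natr1.
rewrite exprMn mulrC; apply: ler_wpM2r; first by rewrite exprn_ge0 // ltW.
apply: le_trans (_ : _ <= expR (k%:R^-1) ^+ k) _.
  rewrite lerXn2r ?nnegrE ?expR_ge0 ?addr_ge0 ?invr_ge0 ?ler0n //; exact: expR_ge1Dx.
by rewrite -expRM_natl mulfV ?gt_eqF.
Qed.

Lemma bin_upper n m : (m%:R : R) ^+ m * ('C(m + n, m))%:R <= expR 1 ^+ m * ((m + n)%:R) ^+ m.
Proof.
elim: m => [|m IH]; first by rewrite !expr0 bin0 mul1r.
have e1 : ((m.+1%:R : R) ^+ m.+1 * ('C(m.+1 + n, m.+1))%:R) =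
   (m.+1%:R) ^+ m * ((m.+1 + n)%:R * ('C(m + n, m))%:R).
  by rewrite exprS [_ * _ ^+ m]mulrC -mulrA -natrM binS_rel natrM.
rewrite e1.
apply: le_trans (_ : _ <= expR 1 * (m%:R) ^+ m * ((m.+1 + n)%:R * ('C(m + n, m))%:R)) _.
  by rewrite ler_wpM2r ?mulr_ge0 ?ler0n // succ_pow_le.
set a : R := (m.+1 + n)%:R; set b : R := m%:R ^+ m * ('C(m + n, m))%:R.
have eL : expR 1 * m%:R ^+ m * (a * 'C(m + n, m)%:R) = (expR 1 * a) * b by rewrite /b; ring.
have eR : expR 1 ^+ m.+1 * a ^+ m.+1 = (expR 1 * a) * (expR 1 ^+ m * a ^+ m) by rewrite !exprS; ring.
rewrite eL eR; apply: ler_wpM2l; first by rewrite mulr_ge0 ?expR_ge0 ?ler0n.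
apply: le_trans IH _.
apply: ler_wpM2l; first by rewrite exprn_ge0 ?expR_ge0.
by rewrite lerXn2r ?nnegrE ?ler0n // ler_nat addSn.
Qed.

End RB.


Section NumB.
Variable R : realType.
Variables m n : nat.
Hypothesis hm : (1 <= m)%N.
Hypothesis hn : (1 <= n)%N.

Lemma card_LamE' : card_Lam m n = 'C(m + n, m).
Proof. by rewrite card_LamE -[X in 'C(_, X) = _](addKn m n) bin_sub ?leq_addr. Qed.

Lemma powm (x : R) : 0 <= x -> (x ^+ m) `^ ((2 * m)%:R^-1) = Num.sqrt x.
Proof.
move=> x0; rewrite -powR_mulrn // -powRrM -powR12_sqrt //; congr (_ `^ _).
have m0 : (m%:R : R) != 0 by rewrite pnatr_eq0 -lt0n.
rewrite natrM; field; rewrite m0 //.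
Qed.

Let mr : R := m%:R.
Let beta : R := 1 + (n%:R - 1) / mr.
Let Cr : R := ('C(m + n, m))%:R.

Lemma mr0 : 0 < mr.
Proof. by rewrite ltr0n. Qed.

Lemma beta0 : 0 <= beta.
Proof.
rewrite /beta addr_ge0 // divr_ge0 ?ler0n // subr_ge0.
by rewrite (_ : 1 = 1%:R) // ler_nat.
Qed.

Lemma beta_le : beta <= (m + n)%:R / mr.
Proof.
have := mr0; rewrite /beta /mr natrD => h.
rewrite ler_pdivlMr // mulrDl divfK ?gt_eqF // mul1r. lra.
Qed.

Lemma lowerC : beta ^+ m <= Cr.
Proof.
apply: le_trans (_ : _ <= ((m + n)%:R / mr) ^+ m) _.
  by rewrite lerXn2r ?nnegrE ?beta0 ?divr_ge0 ?ler0n ?beta_le // ltW // mr0.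
have h := bin_lower n m.
have h' : ((m + n)%:R : R) ^+ m <= mr ^+ m * Cr.
  by rewrite /mr /Cr -!natrX -natrM ler_nat.
by rewrite expr_div_n ler_pdivrMr ?exprn_gt0 ?mr0 // mulrC.
Qed.

Lemma upperC : Cr <= (8 * expR 1 * beta) ^+ m.
Proof.
have h := bin_upper R n m.
have mm0 : 0 < mr ^+ m by rewrite exprn_gt0 // mr0.
apply: le_trans (_ : _ <= expR 1 ^+ m * ((m + n)%:R / mr) ^+ m) _.
  by rewrite expr_div_n mulrA ler_pdivlMr // mulrC.
have mi0 : 0 <= mr^-1 by rewrite invr_ge0 ltW // mr0.
rewrite -exprMn lerXn2r ?nnegrE ?mulr_ge0 ?expR_ge0 ?divr_ge0 ?ler0n ?beta0 //.
rewrite -mulrA (mulrC 8) -mulrA ler_wpM2l ?expR_ge0 //.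
have := mr0; have n1 : (1 : R) <= n%:R by rewrite (_ : 1 = 1%:R) // ler_nat.
have m1 : (1 : R) <= mr by rewrite /mr (_ : 1 = 1%:R) // ler_nat.
rewrite /beta /mr natrD => h0.
rewrite ler_pdivrMr //.
have -> : (1 + (n%:R - 1) / m%:R) * 8 * m%:R = 8 * m%:R + 8 * (n%:R - 1) :> R.
  by field; rewrite gt_eqF.
rewrite -/mr; lra.
Qed.

Lemma numA : Num.sqrt (1 + (n%:R - 1) / m%:R : R) <= (card_Lam m n)%:R `^ ((2 * m)%:R^-1).
Proof.
rewrite card_LamE' -/mr -/beta -/Cr -(powm _ beta0).
apply: ge0_ler_powR; rewrite ?nnegrE ?invr_ge0 ?ler0n ?exprn_ge0 ?beta0 //.
exact: lowerC.
Qed.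

Lemma numB : (card_Lam m n)%:R `^ ((2 * m)%:R^-1)
      <= 2 * Num.sqrt (2 * expR (1 : R)) * Num.sqrt (1 + (n%:R - 1) / m%:R : R).
Proof.
rewrite card_LamE' -/mr -/beta -/Cr.
have e0 : 0 <= 8 * expR (1 : R) * beta by rewrite mulr_ge0 ?beta0 // mulr_ge0 ?expR_ge0.
apply: le_trans (_ : _ <= ((8 * expR 1 * beta) ^+ m) `^ ((2 * m)%:R^-1)) _.
  apply: ge0_ler_powR; rewrite ?nnegrE ?invr_ge0 ?ler0n ?exprn_ge0 //.
  exact: upperC.
rewrite powm //.
have -> : 8 * expR 1 * beta = (4 * (2 * expR 1)) * beta by ring.
have e4 : Num.sqrt (4 : R) = 2.
  by rewrite (_ : (4 : R) = 2 ^+ 2) ?sqrtr_sqr ?ger0_norm //; rewrite expr2; lra.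
by rewrite sqrtrM ?mulr_ge0 ?expR_ge0 // sqrtrM // e4.
Qed.

End NumB.

Theorem lemma5p6 (R : realType) (m n : nat) (hm : (1 <= m)%N) (hn : (1 <= n)%N) :
  (forall xi : Lam m n -> R[i],
     pi2 (@pm R m) (Mxi xi) <= (card_Lam m n)%:R `^ ((2 * m)%:R^-1) * linfnorm xi)
  /\
  (Num.sqrt (1 + (n%:R - 1) / m%:R : R)
     <= pi2 (@pm R m) (Mxi (fun _ : Lam m n => (1 : R[i])))
   /\ pi2 (@pm R m) (Mxi (fun _ : Lam m n => (1 : R[i])))
      = (card_Lam m n)%:R `^ ((2 * m)%:R^-1)
   /\ (card_Lam m n)%:R `^ ((2 * m)%:R^-1)
      <= 2 * Num.sqrt (2 * expR (1 : R)) * Num.sqrt (1 + (n%:R - 1) / m%:R : R)).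
Proof.
have eq1 : pi2 (@pm R m) (Mxi (fun _ : Lam m n => (1 : R[i])))
      = (card_Lam m n)%:R `^ ((2 * m)%:R^-1).
  apply: le_anti; apply/andP; split; last exact: lower.
  by have := @part1 R m n hm (fun _ : Lam m n => (1 : R[i])); rewrite linf1 // mulr1.
split; first by move=> xi; exact: part1.
split; first by rewrite eq1; exact: numA.
by split => //; exact: numB.
Qed.
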